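(* If $\Lambda$ is a Legendrian knot with $4|\operatorname{rot}(\Lambda)|+\operatorname{tb}(\Lambda)\ge 0$, then $$m(\Lambda)\ge\left\lceil\sqrt{4|\operatorname{rot}(\Lambda)|+\operatorname{tb}(\Lambda)}\right\rceil.$$
   Context: Legendrian knots are taken in the standard contact structure on $\mathbb{R}^3$ and represented by front ($xz$-) projections, which have cusps in place of vertical tangencies and in which the strand of more negative slope is the overstrand at every crossing. For an oriented front with $P$ positive crossings, $N$ negative crossings, $C$ cusps, $D$ downward-oriented and $U$ upward-oriented cusps, the Thurston–Bennequin number is $\operatorname{tb}=P-N-\frac12C$ and the rotation number is $\operatorname{rot}=\frac12(D-U)$ (Legendrian isotopy invariants; the sign of $\operatorname{rot}$ depends on orientation). Legendrian mosaic tiles: a square tile whose four edge midpoints are potential connection points; the tiles are $T_0$ (empty); $T_1,\dots,T_4$ (a single arc joining midpoints of two adjacent edges, one per pair of adjacent edges); $T_5,T_6$ (a segment joining midpoints of opposite edges); $T_7,T_8$ (two disjoint arcs each joining adjacent edges, using all four midpoints); $T_{10}$ (two crossing segments joining opposite edges). A Legendrian $n$-mosaic is an $n\times n$ array of these tiles with the array rotated $45^\circ$ counterclockwise so the strands form a front diagram (after rotation $T_2$, $T_4$ contain one cusp and $T_8$ two cusps; $T_1,T_3,T_7$ contain none; in $T_{10}$ the negative-slope strand is over). It is suitably connected if connection points agree across shared edges and none lies on the outer boundary. The mosaic number $m(\Lambda)$ of a Legendrian knot $\Lambda$ is the smallest $n$ such that some suitably connected Legendrian $n$-mosaic depicts a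 front of a Legendrian knot Legendrian isotopic to $\Lambda$. *)

(* Defs.v *)
From Stdlib Require Import Reals List Arith Bool.
Import ListNotations.

(* Edge midpoints of a tile in the (unrotated) array: North, East, South, West.
   After rotating the array 45 degrees counterclockwise, N is upper-left,
   E upper-right, S lower-right, W lower-left. *)
Inductive edge := EN | EE | ES | EW.

Definition opposite (e : edge) : edge :=
  match e with EN => ES | ES => EN | EE => EW | EW => EE end.

(* Legendrian mosaic tiles (T9 is not a Legendrian tile). *)
Inductive tile := T0 | T1 | T2 | T3 | T4 | T5 | T6 | T7 | T8 | T10.

(* Arcs N-W and E-S are the ones that become cusps after rotation
   (both endpoints on the left, resp. right); N-E and S-W do not.
   In T10, the N-S strand has negative slope after rotation and is the
   overstrand; the E-W strand has positive slope and is the understrand. *)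
Definition arcs (t : tile) : list (edge * edge) :=
  match t with
  | T0 => []
  | T1 => [(EN, EE)]
  | T2 => [(EN, EW)]
  | T3 => [(ES, EW)]
  | T4 => [(EE, ES)]
  | T5 => [(EN, ES)]
  | T6 => [(EE, EW)]
  | T7 => [(EN, EE); (ES, EW)]
  | T8 => [(EN, EW); (EE, ES)]
  | T10 => [(EN, ES); (EE, EW)]
  end.

(* A Legendrian n-mosaic: tile at row i (0 = top), column j (0 = left),
   only the entries with i, j < n matter. *)
Definition mosaic := nat -> nat -> tile.

Definition has_point (t : tile) (e : edge) : Prop :=
  exists a b, In (a, b) (arcs t) /\ (a = e \/ b = e).

Definition neighbor_in (n i j : nat) (e : edge) : option (nat * nat) :=
  match e with
  | EN => match i with 0 => None | S i' => Some (i', j) end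
  | ES => if S i <? n then Some (S i, j) else None
  | EE => if S j <? n then Some (i, S j) else None
  | EW => match j with 0 => None | S j' => Some (i, j') end
  end.

Definition suitably_connected (n : nat) (M : mosaic) : Prop :=
  forall i j e, i < n -> j < n -> has_point (M i j) e ->
    exists i' j', neighbor_in n i j e = Some (i', j') /\
                  has_point (M i' j') (opposite e).

(* An oriented traversal step: passing through the tile at (si,sj),
   entering at edge sin and leaving at edge sout. *)
Record step := mkStep { si : nat; sj : nat; sin : edge; sout : edge }.

Definition dstep : step := mkStep 0 0 EN EN.

Definition traverses (s : step) (ab : edge * edge) : Prop :=
  (sin s, sout s) = ab \/ (sout s, sin s) = ab.

Definition step_valid (n : nat) (M : mosaic) (s : step) : Prop :=
  si s < n /\ sj s < n /\
  exists ab, In ab (arcs (M (si s) (sj s))) /\ traverses s ab.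

(* Hence the mosaic depicts a (one-component) knot, and tr
   records an orientation of it. *)
Definition oriented_knot_traversal (n : nat) (M : mosaic) (tr : list step) : Prop :=
  tr <> [] /\
  (forall k, k < length tr -> step_valid n M (nth k tr dstep)) /\
  (forall k, k < length tr ->
     let s := nth k tr dstep in
     let s' := nth ((k + 1) mod length tr) tr dstep in
     neighbor_in n (si s) (sj s) (sout s) = Some (si s', sj s') /\
     sin s' = opposite (sout s)) /\
  (forall i j ab, i < n -> j < n -> In ab (arcs (M i j)) ->
     exists! k, k < length tr /\ si (nth k tr dstep) = i /\
                sj (nth k tr dstep) = j /\ traverses (nth k tr dstep) ab).

Definition is_T10 (t : tile) : bool := match t with T10 => true | _ => false end.
Definition is_N (e : edge) : bool := match e with EN => true | _ => false end.
Definition is_W (e : edge) : bool := match e with EW => true | _ => false end.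
Definition is_EorW (e : edge) : bool := match e with EE | EW => true | _ => false end.

(* step along the N-S strand (the overstrand in a crossing tile) *)
Definition NS_step (s : step) : bool :=
  match sin s, sout s with EN, ES | ES, EN => true | _, _ => false end.

Definition under_WtoE (tr : list step) (i j : nat) : option bool :=
  match find (fun s => Nat.eqb (si s) i && Nat.eqb (sj s) j && is_EorW (sin s)) tr with
  | Some s => Some (is_W (sin s))
  | None => None
  end.

(* Crossing sign (right-hand rule, over x under): the crossing is positive
   iff (over N->S and under W->E) or (over S->N and under E->W). *)
Definition crossing_sign_is (pos : bool) (M : mosaic) (tr : list step) (s : step) : bool :=
  is_T10 (M (si s) (sj s)) && NS_step s &&
  match under_WtoE tr (si s) (sj s) with
  | Some b => Bool.eqb (Bool.eqb (is_N (sin s)) b) pos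
  | None => false
  end.

Definition n_pos (M : mosaic) (tr : list step) : nat :=
  length (filter (crossing_sign_is true M tr) tr).
Definition n_neg (M : mosaic) (tr : list step) : nat :=
  length (filter (crossing_sign_is false M tr) tr).

(* cusps: traversing a N-W arc (left cusp) or an E-S arc (right cusp);
   downward iff N->W or E->S, upward iff W->N or S->E *)
Definition down_cusp (s : step) : bool :=
  match sin s, sout s with EN, EW | EE, ES => true | _, _ => false end.
Definition up_cusp (s : step) : bool :=
  match sin s, sout s with EW, EN | ES, EE => true | _, _ => false end.

Definition n_down (tr : list step) : nat := length (filter down_cusp tr).
Definition n_up (tr : list step) : nat := length (filter up_cusp tr).

Definition tb (M : mosaic) (tr : list step) : R :=
  (INR (n_pos M tr) - INR (n_neg M tr) - INR (n_down tr + n_up tr) / 2)%R.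
Definition rot (tr : list step) : R :=
  ((INR (n_down tr) - INR (n_up tr)) / 2)%R.

Definition Rceil (x : R) : Z := (- Int_part (- x))%Z.

(* Main.v *)
Require Import Defs.
From Stdlib Require Import Reals List ZArith.
From Stdlib Require Import Lia Lra Bool Arith.
Import ListNotations.

Module Aux.
Local Open Scope Z_scope.

Fixpoint sumZ (f : nat -> Z) (m : nat) : Z :=
  match m with O => 0 | S m' => sumZ f m' + f m' end.

Lemma sumZ_ext f g m : (forall k, (k < m)%nat -> f k = g k) -> sumZ f m = sumZ g m.
Proof.
  induction m; simpl; intros H; auto.
  rewrite IHm by (intros; apply H; lia). rewrite H by lia. reflexivity.
Qed.

Lemma sumZ_le f g m : (forall k, (k < m)%nat -> f k <= g k) -> sumZ f m <= sumZ g m.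
Proof.
  induction m; simpl; intros H; [lia|].
  specialize (IHm (fun k Hk => H k ltac:(lia))). specialize (H m ltac:(lia)). lia.
Qed.

Lemma sumZ_add f g m : sumZ (fun k => f k + g k) m = sumZ f m + sumZ g m.
Proof. induction m; simpl; [lia|]. rewrite IHm. ring. Qed.

Lemma sumZ_sub f g m : sumZ (fun k => f k - g k) m = sumZ f m - sumZ g m.
Proof. induction m; simpl; [lia|]. rewrite IHm. ring. Qed.

Lemma sumZ_const c m : sumZ (fun _ => c) m = Z.of_nat m * c.
Proof. induction m; simpl sumZ; [lia|]. rewrite IHm. lia. Qed.

Lemma sumZ_zero m : sumZ (fun _ => 0) m = 0.
Proof. rewrite sumZ_const. lia. Qed.

Lemma sumZ_front f m : sumZ f (S m) = f O + sumZ (fun k => f (S k)) m.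
Proof.
  induction m as [|m IH]; [simpl; ring|].
  change (sumZ f (S (S m))) with (sumZ f (S m) + f (S m)).
  rewrite IH. simpl. ring.
Qed.

Lemma sumZ_swap (g : nat -> nat -> Z) a b :
  sumZ (fun k => sumZ (fun i => g i k) a) b = sumZ (fun i => sumZ (fun k => g i k) b) a.
Proof.
  induction b; simpl.
  - symmetry. apply sumZ_zero.
  - rewrite IHb. rewrite <- sumZ_add. reflexivity.
Qed.

Lemma sumZ_point (w : nat -> Z) a L : (a < L)%nat ->
  sumZ (fun k => if Nat.eqb a k then w k else 0) L = w a.
Proof.
  induction L; intros H; [lia|]. simpl. destruct (Nat.eqb_spec a L).
  - subst. rewrite (sumZ_ext _ (fun _ => 0)). rewrite sumZ_zero. ring.
    intros k Hk. destruct (Nat.eqb_spec L k); [lia|auto].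
  - rewrite IHL by lia. ring.
Qed.

Lemma sumZ_cyc f L : (0 < L)%nat -> sumZ (fun k => f ((k+1) mod L)%nat) L = sumZ f L.
Proof.
  intros H. destruct L as [|m]; [lia|].
  change (sumZ (fun k => f ((k + 1) mod S m)%nat) (S m)) with
    (sumZ (fun k => f ((k + 1) mod S m)%nat) m + f ((m+1) mod S m)%nat).
  rewrite sumZ_front.
  rewrite (sumZ_ext _ (fun k => f (S k))).
  - replace ((m+1) mod S m)%nat with O. ring.
    replace (m+1)%nat with (S m) by lia. rewrite Nat.Div0.mod_same; lia.
  - intros k Hk. f_equal. rewrite Nat.mod_small; lia.
Qed.

Definition b2z (b : bool) : Z := if b then 1 else 0.

Lemma count_sum (p : step -> bool) (l : list step) :
  Z.of_nat (length (filter p l)) = sumZ (fun k => b2z (p (nth k l dstep))) (length l).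
Proof.
  induction l as [|a l IH]; [reflexivity|].
  cbn [length]. rewrite sumZ_front. simpl nth. rewrite <- IH.
  simpl filter. destruct (p a); simpl length; unfold b2z; lia.
Qed.

Definition eoff (e : edge) : Z := match e with EN | EE => 1 | ES | EW => -1 end.
Definition Yv (i j : nat) (e : edge) : Z := 2 * (Z.of_nat j - Z.of_nat i) + eoff e.

Lemma Y_nb n i j e i' j' : neighbor_in n i j e = Some (i', j') -> Yv i' j' (opposite e) = Yv i j e.
Proof.
  unfold Yv; destruct e; cbn [opposite eoff neighbor_in]; intros H.
  - destruct i; [discriminate|]. inversion H; subst. lia.
  - destruct (S j <? n)%nat; inversion H; subst. lia.
  - destruct (S i <? n)%nat; inversion H; subst. lia.
  - destruct j; [discriminate|]. inversion H; subst. lia.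
Qed.

Definition dY (s : step) : Z := Yv (si s) (sj s) (sout s) - Yv (si s) (sj s) (Defs.sin s).

Lemma sum_dY n M tr : oriented_knot_traversal n M tr ->
  sumZ (fun k => dY (nth k tr dstep)) (length tr) = 0.
Proof.
  intros [Hne [Hv [Hc Hu]]].
  assert (HL : (0 < length tr)%nat) by (destruct tr; [congruence| simpl; lia]).
  unfold dY.
  set (g := fun k => Yv (si (nth k tr dstep)) (sj (nth k tr dstep)) (Defs.sin (nth k tr dstep))).
  rewrite (sumZ_ext _ (fun k => g ((k+1) mod length tr)%nat - g k)).
  - rewrite sumZ_sub. rewrite (sumZ_cyc g _ HL). ring.
  - intros k Hk. specialize (Hc k Hk). cbv zeta in Hc. destruct Hc as [Hn Hin].
    unfold g. rewrite Hin. rewrite (Y_nb _ _ _ _ _ _ Hn). reflexivity.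
Qed.

Definition posb (s : step) (i j : nat) : bool := Nat.eqb (si s) i && Nat.eqb (sj s) j.

Definition tsum (tr : list step) (i j : nat) (w : step -> Z) : Z :=
  sumZ (fun k => if posb (nth k tr dstep) i j then w (nth k tr dstep) else 0) (length tr).

Lemma group n (tr : list step) (w : step -> Z) :
  (forall k, (k < length tr)%nat -> (si (nth k tr dstep) < n /\ sj (nth k tr dstep) < n)%nat) ->
  sumZ (fun k => w (nth k tr dstep)) (length tr) =
  sumZ (fun i => sumZ (fun j => tsum tr i j w) n) n.
Proof.
  intros H. unfold tsum.
  rewrite (sumZ_ext _ (fun k => sumZ (fun i => sumZ (fun j =>
      if posb (nth k tr dstep) i j then w (nth k tr dstep) else 0) n) n)).
  - rewrite sumZ_swap. apply sumZ_ext. intros i Hi. rewrite sumZ_swap. reflexivity.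
  - intros k Hk. destruct (H k Hk) as [H1 H2]. unfold posb.
    rewrite (sumZ_ext _ (fun i => if Nat.eqb (si (nth k tr dstep)) i then w (nth k tr dstep) else 0)).
    + rewrite (sumZ_point (fun _ => w (nth k tr dstep))) by exact H1. reflexivity.
    + intros i Hi. destruct (Nat.eqb (si (nth k tr dstep)) i); simpl.
      * rewrite (sumZ_point (fun _ => w (nth k tr dstep))) by exact H2. reflexivity.
      * apply sumZ_zero.
Qed.

Lemma at_tile n M tr i j k : oriented_knot_traversal n M tr -> (k < length tr)%nat ->
  posb (nth k tr dstep) i j = true ->
  exists ab, In ab (arcs (M i j)) /\ traverses (nth k tr dstep) ab.
Proof.
  intros [_ [Hv _]] Hk Hp. destruct (Hv k Hk) as [_ [_ [ab [Hin Ht]]]].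
  unfold posb in Hp. apply andb_prop in Hp as [P1 P2].
  apply Nat.eqb_eq in P1, P2. rewrite P1, P2 in Hin. eauto.
Qed.

Lemma uniq n M tr i j ab k k' : oriented_knot_traversal n M tr -> (i < n)%nat -> (j < n)%nat ->
  In ab (arcs (M i j)) -> (k < length tr)%nat -> (k' < length tr)%nat ->
  posb (nth k tr dstep) i j = true -> posb (nth k' tr dstep) i j = true ->
  traverses (nth k tr dstep) ab -> traverses (nth k' tr dstep) ab -> k = k'.
Proof.
  intros [_ [_ [_ Hu]]] Hi Hj Hin Hk Hk' P P' T T'.
  destruct (Hu i j ab Hi Hj Hin) as [x [_ Ux]].
  unfold posb in P, P'. apply andb_prop in P as [P1 P2]. apply andb_prop in P' as [P1' P2'].
  apply Nat.eqb_eq in P1, P2, P1', P2'.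
  rewrite <- (Ux k), <- (Ux k'); auto.
Qed.

Lemma exist_step n M tr i j ab : oriented_knot_traversal n M tr -> (i < n)%nat -> (j < n)%nat ->
  In ab (arcs (M i j)) -> exists k, (k < length tr)%nat /\ posb (nth k tr dstep) i j = true /\
     traverses (nth k tr dstep) ab.
Proof.
  intros [_ [_ [_ Hu]]] Hi Hj Hin.
  destruct (Hu i j ab Hi Hj Hin) as [x [[Hx [P1 [P2 T]]] _]].
  exists x. split; [auto|split; [|auto]]. unfold posb. rewrite P1, P2.
  rewrite !Nat.eqb_refl. reflexivity.
Qed.

Lemma tile_zero n M tr i j w : oriented_knot_traversal n M tr ->
  arcs (M i j) = [] -> tsum tr i j w = 0.
Proof.
  intros H Ha. unfold tsum. rewrite (sumZ_ext _ (fun _ => 0)). apply sumZ_zero.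
  intros k Hk. destruct (posb (nth k tr dstep) i j) eqn:P; auto.
  destruct (at_tile _ _ _ _ _ _ H Hk P) as [ab [Hin _]]. rewrite Ha in Hin. destruct Hin.
Qed.

Lemma tile_one n M tr i j ab (w : step -> Z) : oriented_knot_traversal n M tr ->
  (i < n)%nat -> (j < n)%nat -> arcs (M i j) = [ab] ->
  exists k1, (k1 < length tr)%nat /\ posb (nth k1 tr dstep) i j = true /\
    traverses (nth k1 tr dstep) ab /\ tsum tr i j w = w (nth k1 tr dstep).
Proof.
  intros H Hi Hj Ha.
  assert (Hin : In ab (arcs (M i j))) by (rewrite Ha; left; auto).
  destruct (exist_step _ _ _ _ _ _ H Hi Hj Hin) as [k1 [Hk1 [P1 T1]]].
  exists k1. repeat split; auto.
  unfold tsum. rewrite (sumZ_ext _ (fun k => if Nat.eqb k1 k then w (nth k tr dstep) else 0)).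
  - apply (sumZ_point (fun k => w (nth k tr dstep))). auto.
  - intros k Hk. destruct (posb (nth k tr dstep) i j) eqn:P.
    + destruct (at_tile _ _ _ _ _ _ H Hk P) as [ab' [Hin' T']]. rewrite Ha in Hin'.
      destruct Hin' as [<-|[]].
      assert (k1 = k) by exact (uniq _ _ _ _ _ _ _ _ H Hi Hj Hin Hk1 Hk P1 P T1 T'). subst. rewrite Nat.eqb_refl. auto.
    + destruct (Nat.eqb_spec k1 k); auto. subst. congruence.
Qed.

Lemma tile_two n M tr i j ab1 ab2 (w : step -> Z) : oriented_knot_traversal n M tr ->
  (i < n)%nat -> (j < n)%nat -> arcs (M i j) = [ab1; ab2] ->
  (forall s, traverses s ab1 -> traverses s ab2 -> False) ->
  exists k1 k2, (k1 < length tr)%nat /\ (k2 < length tr)%nat /\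
    posb (nth k1 tr dstep) i j = true /\ posb (nth k2 tr dstep) i j = true /\
    traverses (nth k1 tr dstep) ab1 /\ traverses (nth k2 tr dstep) ab2 /\
    tsum tr i j w = w (nth k1 tr dstep) + w (nth k2 tr dstep).
Proof.
  intros H Hi Hj Ha Hd.
  assert (Hin1 : In ab1 (arcs (M i j))) by (rewrite Ha; left; auto).
  assert (Hin2 : In ab2 (arcs (M i j))) by (rewrite Ha; right; left; auto).
  destruct (exist_step _ _ _ _ _ _ H Hi Hj Hin1) as [k1 [Hk1 [P1 T1]]].
  destruct (exist_step _ _ _ _ _ _ H Hi Hj Hin2) as [k2 [Hk2 [P2 T2]]].
  assert (Hne : k1 <> k2) by (intros ->; eapply Hd; eauto).
  exists k1, k2. repeat split; auto.
  unfold tsum. rewrite (sumZ_ext _ (fun k => (if Nat.eqb k1 k then w (nth k tr dstep) else 0)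
      + (if Nat.eqb k2 k then w (nth k tr dstep) else 0))).
  - rewrite sumZ_add. rewrite (sumZ_point (fun k => w (nth k tr dstep))) by auto.
    rewrite (sumZ_point (fun k => w (nth k tr dstep))) by auto. reflexivity.
  - intros k Hk. destruct (posb (nth k tr dstep) i j) eqn:P.
    + destruct (at_tile _ _ _ _ _ _ H Hk P) as [ab' [Hin' T']]. rewrite Ha in Hin'.
      destruct Hin' as [<-|[<-|[]]].
      * assert (k1 = k) by exact (uniq _ _ _ _ _ _ _ _ H Hi Hj Hin1 Hk1 Hk P1 P T1 T'). subst.
        rewrite Nat.eqb_refl. destruct (Nat.eqb_spec k2 k); [lia|]. ring.
      * assert (k2 = k) by exact (uniq _ _ _ _ _ _ _ _ H Hi Hj Hin2 Hk2 Hk P2 P T2 T'). subst.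
        rewrite Nat.eqb_refl. destruct (Nat.eqb_spec k1 k); [lia|]. ring.
    + destruct (Nat.eqb_spec k1 k); [subst; congruence|].
      destruct (Nat.eqb_spec k2 k); [subst; congruence|]. ring.
Qed.

Lemma step_shape s i j ab : posb s i j = true -> traverses s ab ->
  s = mkStep i j (fst ab) (snd ab) \/ s = mkStep i j (snd ab) (fst ab).
Proof.
  destruct s as [a b c d]. unfold posb, traverses; simpl. intros P T.
  apply andb_prop in P as [P1 P2]. apply Nat.eqb_eq in P1, P2. subst.
  destruct T as [T|T]; rewrite <- T; simpl; auto.
Qed.

Lemma under_ok n M tr i j k2 : oriented_knot_traversal n M tr -> (i < n)%nat -> (j < n)%nat ->
  M i j = T10 -> (k2 < length tr)%nat -> posb (nth k2 tr dstep) i j = true ->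
  traverses (nth k2 tr dstep) (EE, EW) ->
  under_WtoE tr i j = Some (is_W (Defs.sin (nth k2 tr dstep))).
Proof.
  intros H Hi Hj HM Hk2 P2 T2. unfold under_WtoE.
  destruct (find _ tr) eqn:Hf.
  - apply find_some in Hf as [Hin Hfs].
    apply In_nth with (d := dstep) in Hin as [k [Hk Hks]].
    rewrite <- Hks in Hfs |- *.
    change (posb (nth k tr dstep) i j && is_EorW (Defs.sin (nth k tr dstep)) = true) in Hfs.
    apply andb_prop in Hfs as [P E].
    destruct (at_tile _ _ _ _ _ _ H Hk P) as [ab [Hin T]]. rewrite HM in Hin.
    simpl in Hin. destruct Hin as [<-|[<-|[]]].
    + exfalso. destruct (nth k tr dstep) as [a b c d]. unfold traverses in T; simpl in *.
      destruct T as [T|T]; inversion T; subst; discriminate.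
    + assert (HinA : In (EE, EW) (arcs (M i j))) by (rewrite HM; simpl; auto).
      assert (k = k2) by exact (uniq _ _ _ _ _ _ _ _ H Hi Hj HinA Hk Hk2 P P2 T T2). subst. reflexivity.
  - exfalso. assert (Hin : In (nth k2 tr dstep) tr) by (apply nth_In; auto).
    pose proof (find_none _ _ Hf _ Hin) as F.
    change (posb (nth k2 tr dstep) i j && is_EorW (Defs.sin (nth k2 tr dstep)) = false) in F.
    rewrite P2 in F. simpl in F.
    destruct (nth k2 tr dstep) as [a b c d]. unfold traverses in T2; simpl in *.
    destruct T2 as [T|T]; inversion T; subst; discriminate.
Qed.

Definition wt (b : bool) (M : mosaic) (tr : list step) (s : step) : Z :=
  (if b then 3 * b2z (down_cusp s) - 5 * b2z (up_cusp s) + dY s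
        else 3 * b2z (up_cusp s) - 5 * b2z (down_cusp s) - dY s)
  + 2 * b2z (crossing_sign_is true M tr s) - 2 * b2z (crossing_sign_is false M tr s).


Ltac shape P T := let E := fresh "E" in
  destruct (step_shape _ _ _ _ P T) as [E|E]; rewrite E in *; clear E.

Ltac disj := let s := fresh "s" in let A := fresh "A" in let B := fresh "B" in
  intros s A B; unfold traverses in *; destruct A as [A|A]; destruct B as [B|B]; congruence.

Ltac fin HM b := unfold wt, crossing_sign_is, dY; cbn [si sj sout Defs.sin fst snd];
  rewrite HM; destruct b; cbn [down_cusp up_cusp b2z is_T10 andb NS_step Defs.sin sout si sj fst snd is_N is_W Bool.eqb]; unfold Yv, eoff; lia.

Lemma tile_bound b n M tr i j : oriented_knot_traversal n M tr -> (i < n)%nat -> (j < n)%nat ->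
  tsum tr i j (wt b M tr) <= 2.
Proof.
  intros H Hi Hj. destruct (M i j) eqn:HM.
  - rewrite (tile_zero n M tr i j) by (auto; rewrite HM; reflexivity). lia.
  - destruct (tile_one n M tr i j (EN,EE) (wt b M tr) H Hi Hj ltac:(rewrite HM; reflexivity)) as [k1 [Hk1 [P1 [T1 ->]]]].
    shape P1 T1; fin HM b.
  - destruct (tile_one n M tr i j (EN,EW) (wt b M tr) H Hi Hj ltac:(rewrite HM; reflexivity)) as [k1 [Hk1 [P1 [T1 ->]]]].
    shape P1 T1; fin HM b.
  - destruct (tile_one n M tr i j (ES,EW) (wt b M tr) H Hi Hj ltac:(rewrite HM; reflexivity)) as [k1 [Hk1 [P1 [T1 ->]]]].
    shape P1 T1; fin HM b.
  - destruct (tile_one n M tr i j (EE,ES) (wt b M tr) H Hi Hj ltac:(rewrite HM; reflexivity)) as [k1 [Hk1 [P1 [T1 ->]]]].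
    shape P1 T1; fin HM b.
  - destruct (tile_one n M tr i j (EN,ES) (wt b M tr) H Hi Hj ltac:(rewrite HM; reflexivity)) as [k1 [Hk1 [P1 [T1 ->]]]].
    shape P1 T1; fin HM b.
  - destruct (tile_one n M tr i j (EE,EW) (wt b M tr) H Hi Hj ltac:(rewrite HM; reflexivity)) as [k1 [Hk1 [P1 [T1 ->]]]].
    shape P1 T1; fin HM b.
  - destruct (tile_two n M tr i j (EN,EE) (ES,EW) (wt b M tr) H Hi Hj ltac:(rewrite HM; reflexivity) ltac:(disj))
      as [k1 [k2 [Hk1 [Hk2 [P1 [P2 [T1 [T2 ->]]]]]]]].
    shape P1 T1; shape P2 T2; fin HM b.
  - destruct (tile_two n M tr i j (EN,EW) (EE,ES) (wt b M tr) H Hi Hj ltac:(rewrite HM; reflexivity) ltac:(disj))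
      as [k1 [k2 [Hk1 [Hk2 [P1 [P2 [T1 [T2 ->]]]]]]]].
    shape P1 T1; shape P2 T2; fin HM b.
  - destruct (tile_two n M tr i j (EN,ES) (EE,EW) (wt b M tr) H Hi Hj ltac:(rewrite HM; reflexivity) ltac:(disj))
      as [k1 [k2 [Hk1 [Hk2 [P1 [P2 [T1 [T2 ->]]]]]]]].
    pose proof (under_ok n M tr i j k2 H Hi Hj HM Hk2 P2 T2) as HU.
    shape P1 T1; shape P2 T2;
    unfold wt, crossing_sign_is, dY; cbn [si sj sout Defs.sin fst snd];
    rewrite HM, HU; destruct b; cbn [down_cusp up_cusp b2z is_T10 andb NS_step Defs.sin sout si sj fst snd is_N is_W Bool.eqb]; unfold Yv, eoff; lia.
Qed.

Lemma main_ineq b n M tr : oriented_knot_traversal n M tr ->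
  sumZ (fun k => wt b M tr (nth k tr dstep)) (length tr) <= 2 * (Z.of_nat n * Z.of_nat n).
Proof.
  intros H. rewrite (group n).
  - eapply Z.le_trans.
    + apply sumZ_le. intros i Hi. apply sumZ_le. intros j Hj. apply (tile_bound b n M tr i j H Hi Hj).
    + rewrite (sumZ_ext (fun i => sumZ (fun _ => 2) n) (fun _ => Z.of_nat n * 2)) by (intros; apply sumZ_const).
      rewrite sumZ_const. lia.
  - intros k Hk. destruct H as [_ [Hv _]]. destruct (Hv k Hk) as [A [B _]]. auto.
Qed.

Lemma lin5 (a b c d e : nat -> Z) m :
  sumZ (fun k => 3 * a k - 5 * b k + c k + 2 * d k - 2 * e k) m =
  3 * sumZ a m - 5 * sumZ b m + sumZ c m + 2 * sumZ d m - 2 * sumZ e m.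
Proof. induction m; cbn [sumZ]; lia. Qed.

Lemma sum_wt b n M tr : oriented_knot_traversal n M tr ->
  sumZ (fun k => wt b M tr (nth k tr dstep)) (length tr) =
  (if b then 3 * Z.of_nat (n_down tr) - 5 * Z.of_nat (n_up tr)
   else 3 * Z.of_nat (n_up tr) - 5 * Z.of_nat (n_down tr))
  + 2 * Z.of_nat (n_pos M tr) - 2 * Z.of_nat (n_neg M tr).
Proof.
  intros H. pose proof (sum_dY n M tr H) as HD.
  unfold n_down, n_up, n_pos, n_neg. rewrite !count_sum.
  set (A := fun k => b2z (down_cusp (nth k tr dstep))) in *.
  set (B := fun k => b2z (up_cusp (nth k tr dstep))) in *.
  set (C := fun k => dY (nth k tr dstep)) in *.
  set (Dd := fun k => b2z (crossing_sign_is true M tr (nth k tr dstep))) in *.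
  set (E := fun k => b2z (crossing_sign_is false M tr (nth k tr dstep))) in *.
  destruct b.
  - rewrite (sumZ_ext _ (fun k => 3 * A k - 5 * B k + C k + 2 * Dd k - 2 * E k)).
    + rewrite lin5. lia.
    + intros k _. subst A B C Dd E. cbv beta. unfold wt. ring.
  - rewrite (sumZ_ext _ (fun k => 3 * B k - 5 * A k + (- C k) + 2 * Dd k - 2 * E k)).
    + rewrite lin5. rewrite (sumZ_ext (fun k => - C k) (fun k => 0 - C k)) by (intros; ring).
      rewrite sumZ_sub, sumZ_zero. lia.
    + intros k _. subst A B C Dd E. cbv beta. unfold wt. ring.
Qed.

End Aux.
Import Aux.

Lemma Rceil_le (y : R) (n : nat) : (y <= INR n)%R -> (Rceil y <= Z.of_nat n)%Z.
Proof.
  intros Hy. unfold Rceil, Int_part. destruct (archimed (- y)) as [A _].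
  rewrite INR_IZR_INZ in Hy.
  assert (Hl : (IZR (- Z.of_nat n) < IZR (up (- y)))%R) by (rewrite opp_IZR; lra).
  apply lt_IZR in Hl. lia.
Qed.

Theorem theorem2p3 (n : nat) (M : mosaic) (tr : list step) :
  suitably_connected n M ->
  oriented_knot_traversal n M tr ->
  (0 <= 4 * Rabs (rot tr) + tb M tr)%R ->
  (Rceil (sqrt (4 * Rabs (rot tr) + tb M tr)) <= Z.of_nat n)%Z.
Proof.
  intros Hsc H Hx.
  pose proof (main_ineq true n M tr H) as H1. pose proof (main_ineq false n M tr H) as H2.
  rewrite (sum_wt true n M tr H) in H1. rewrite (sum_wt false n M tr H) in H2.
  apply IZR_le in H1. apply IZR_le in H2.
  repeat first [rewrite plus_IZR in H1 | rewrite minus_IZR in H1 | rewrite mult_IZR in H1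
    | rewrite plus_IZR in H2 | rewrite minus_IZR in H2 | rewrite mult_IZR in H2].
  rewrite <- ?INR_IZR_INZ in H1, H2.
  assert (Hxn : (4 * Rabs (rot tr) + tb M tr <= INR n * INR n)%R).
  { unfold rot, tb. rewrite plus_INR.
    set (nn := (INR n * INR n)%R) in *.
    destruct (Rle_dec (INR (n_up tr)) (INR (n_down tr))).
    - rewrite Rabs_pos_eq by lra. lra.
    - rewrite Rabs_left by lra. lra. }
  apply Rceil_le.
  rewrite <- (sqrt_square (INR n)) by apply pos_INR.
  apply sqrt_le_1_alt. exact Hxn.
Qed.
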